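(* Let $A,B$ be convex subsets of a real topological vector space $X$ with $A\subseteq B\subseteq\overline{A}$. Then $\operatorname{fri} A\subseteq\operatorname{fri} B\subseteq\operatorname{fri}\overline{A}$.
   Context: For a convex set $C$, a convex subset $F\subseteq C$ is a face of $C$ if for every $x\in F$ and all $y,z\in C$ with $x\in(y,z)=\{(1-t)y+tz:t\in(0,1)\}$ we have $y,z\in F$; $F_{\min}(x,C)$ is the intersection of all faces of $C$ containing $x\in C$. The face relative interior is $\operatorname{fri} C=\{x\in C: C\subseteq\overline{F_{\min}(x,C)}\}$. *)

(* Defs.v *)
From HB Require Import structures.
From mathcomp Require Import all_boot all_order all_algebra.
From mathcomp Require Import all_classical all_reals all_analysis.
Set Implicit Arguments. Unset Strict Implicit. Unset Printing Implicit Defensive.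
Import Order.TTheory GRing.Theory Num.Theory.
Local Open Scope classical_set_scope.
Local Open Scope ring_scope.

Definition open_segment (R : realType) (X : lmodType R) (y z : X) : set X :=
  [set (1 - t) *: y + t *: z | t in `]0, 1[%classic].

Definition convex (R : realType) (X : lmodType R) (C : set X) : Prop :=
  @convex_set R X C.

Definition is_face (R : realType) (X : lmodType R) (C F : set X) : Prop :=
  [/\ convex F, F `<=` C &
      forall x y z, F x -> C y -> C z -> open_segment y z x -> F y /\ F z].

Definition Fmin (R : realType) (X : lmodType R) (x : X) (C : set X) : set X :=
  \bigcap_(F in [set F | is_face C F /\ F x]) F.

Definition fri (R : realType) (X : topologicalLmodType R) (C : set X) : set X :=
  [set x | C x /\ C `<=` closure (Fmin x C)].

(* Main.v *)
Require Import Defs.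
From HB Require Import structures.
From mathcomp Require Import all_boot all_order all_algebra.
From mathcomp Require Import all_classical all_reals all_analysis.
Local Open Scope classical_set_scope.

Lemma convexI (R : realType) (X : lmodType R) (F D : set X) :
  convex F -> convex D -> convex (F `&` D).
Proof.
move=> cF cD x y l; rewrite !in_setI => /andP[xF xD] /andP[yF yD].
by apply/andP; split; [apply: cF|apply: cD].
Qed.

Lemma Fmin_sub (R : realType) (X : lmodType R) (C D : set X) (x : X) :
  convex D -> D `<=` C -> D x -> Fmin x D `<=` Fmin x C.
Proof.
move=> cD DC xD w; rewrite /Fmin => Hw F /= [FF Fx]; case: FF => cF FC Fface.
have : (F `&` D) w.
  apply: Hw; split; last by [].
  split; first exact: convexI.
  - by move=> u [].
  - move=> u y z [uF uD] yD zD seg.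
    have [yF zF] := Fface u y z uF (DC _ yD) (DC _ zD) seg.
    by split; split.
by case.
Qed.

Lemma closure_mono_sub (T : topologicalType) (A B : set T) :
  A `<=` closure B -> closure A `<=` closure B.
Proof.
move=> AB; rewrite [X in _ `<=` X](closure_id (closure B)).1; last exact: closed_closure.
exact: closure_subset.
Qed.

Theorem proposition4p8 (R : realType) (X : topologicalLmodType R) (A B : set X) :
  convex A -> convex B -> A `<=` B -> B `<=` closure A ->
  fri A `<=` fri B /\ fri B `<=` fri (closure A).
Proof.
move=> cA cB AB BA; split.
- move=> x [xA Ax]; split; first exact: AB.
  apply: (subset_trans BA); apply: closure_mono_sub.
  apply: (subset_trans Ax); apply: closure_subset; exact: (@Fmin_sub _ _ _ _ _ cA AB xA).
- move=> x [xB Bx]; split; first exact: BA.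
  apply: closure_mono_sub; apply: (subset_trans AB).
  apply: (subset_trans Bx); apply: closure_subset; exact: (@Fmin_sub _ _ _ _ _ cB BA xB).
Qed.
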